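(* Let $G$ be a network with three sources $s_1,s_2,s_3$ and three terminals $t_1,t_2,t_3$ in which every vertex other than the sources and terminals has in-degree plus out-degree at most $3$, such that (a) $G$ has no vertex of type $(3,3)$, $(2,3)$ or $(3,2)$, and (b) for all $i,j$ there exist two edge-disjoint directed paths from $s_i$ to $t_j$. Suppose there are exactly two distinct colors among the vertices of type $(2,2)$ in $G$. Then for every finite field $\mathbb{F}$ of characteristic different from $2$ and sufficiently large size there exists a linear network code over $\mathbb{F}$ under which every terminal recovers $X_1+X_2+X_3$.
   Context: A network is a finite directed acyclic graph $G=(V,E)$ (parallel edges allowed), every edge of unit capacity carrying one symbol of a finite field $\mathbb{F}$; sources have no incoming edges ($s_i$ holds $X_i\in\mathbb{F}$, independent, uniform), terminals have no outgoing edges. In a linear network code each edge leaving a non-source vertex carries an $\mathbb{F}$-linear combination of the symbols on edges entering its tail; an edge leaving a source carries a multiple of its symbol. A terminal recovers a quantity if it is a function of the symbols on its incoming edges. For $v\in V$, $c_s(v)$ is the number of sources with a directed path to $v$ and $c_t(v)$ the number of terminals reachable from $v$ (a vertex reaches itself); $(c_s(v),c_t(v))$ is the type of $v$. For $v$ of type $(2,2)$, its color is the tuple $(s_a,s_b,t_c,t_d)$ of the two sources reaching $v$ and the two terminals reachable from $v$. *)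

(* Defs.v *)
From HB Require Import structures.
From mathcomp Require Import all_boot all_order all_algebra all_field.
Set Implicit Arguments. Unset Strict Implicit. Unset Printing Implicit Defensive.
Import GRing.Theory.
Local Open Scope ring_scope.

(* A network: vertex type V, edge type E (parallel edges allowed), each
   edge e goes from [tl e] to [hd e]. *)
Section Network.
Variables (V E : finType) (tl hd : E -> V).

Definition adj : rel V := fun u w => [exists e : E, (tl e == u) && (hd e == w)].

Definition reaches (u w : V) : bool := connect adj u w.

Definition acyclic : Prop := forall e : E, ~~ reaches (hd e) (tl e).

Definition indeg (v : V) : nat := #|[set e : E | hd e == v]|.
Definition outdeg (v : V) : nat := #|[set e : E | tl e == v]|.

Definition is_path (u w : V) (p : seq E) : Prop :=
  exists e0 p', p = e0 :: p' /\ tl e0 = u /\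
    path (fun e f => hd e == tl f) e0 p' /\ hd (last e0 p') = w.

Definition edge_disjoint (p q : seq E) : Prop :=
  forall e, e \in p -> e \notin q.

Variables (s t : 'I_3 -> V).

Definition is_network : Prop :=
  [/\ acyclic, injective s, injective t,
      (forall i, indeg (s i) = 0%N) & (forall j, outdeg (t j) = 0%N)].

Definition is_src (v : V) : bool := [exists i, s i == v].
Definition is_term (v : V) : bool := [exists j, t j == v].

Definition src_set (v : V) : {set 'I_3} := [set i | reaches (s i) v].
Definition term_set (v : V) : {set 'I_3} := [set j | reaches v (t j)].

Definition c_s (v : V) : nat := #|src_set v|.
Definition c_t (v : V) : nat := #|term_set v|.

Definition has_type (v : V) (a b : nat) : bool := (c_s v == a) && (c_t v == b).

Definition color (v : V) : {set 'I_3} * {set 'I_3} := (src_set v, term_set v).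

Definition colors22 : {set {set 'I_3} * {set 'I_3}} :=
  [set color v | v in [set v : V | has_type v 2 2]].

(* Linear network code over F. [k0 e] is the coefficient used on an edge
   leaving a source; [k f e] is the coefficient of the symbol on edge [f]
   (entering [tl e]) in the combination carried by [e]. [sym e X] is the
   symbol carried by edge [e] when the sources hold [X]. *)
Definition code_equations (F : fieldType) (k0 : E -> F) (k : E -> E -> F)
    (sym : E -> ('I_3 -> F) -> F) : Prop :=
  forall (X : 'I_3 -> F) (e : E),
    (forall i, tl e = s i -> sym e X = k0 e * X i) /\
    (~~ is_src (tl e) ->
       sym e X = \sum_(f : E | hd f == tl e) k f e * sym f X).

(* terminal [v] recovers X_1 + X_2 + X_3: it is a function of the symbols
   on the incoming edges of [v] *)
Definition recovers_sum (F : fieldType) (sym : E -> ('I_3 -> F) -> F) (v : V)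
  : Prop :=
  exists g : (E -> F) -> F, forall X : 'I_3 -> F,
    g (fun e => if hd e == v then sym e X else 0) = X 0 + X 1 + X 2.

Definition linear_code_sum (F : fieldType) : Prop :=
  exists (k0 : E -> F) (k : E -> E -> F) (sym : E -> ('I_3 -> F) -> F),
    code_equations k0 k sym /\ forall j, recovers_sum sym (t j).

End Network.

(* Main.v *)
Require Import Defs.
From HB Require Import structures.
From mathcomp Require Import all_boot all_order all_algebra all_field.
From Stdlib Require Import ClassicalEpsilon.
Set Implicit Arguments. Unset Strict Implicit. Unset Printing Implicit Defensive.

Section Graph.
Variables (V E : finType) (tl hd : E -> V).
Local Notation reach := (reaches tl hd).
Local Notation adjr := (adj tl hd).

Lemma reach_refl x : reach x x. Proof. exact: connect0. Qed.

Lemma reach_edge e : reach (tl e) (hd e).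
Proof. apply: connect1; apply/existsP; exists e; by rewrite !eqxx. Qed.

Lemma reach_trans x y z : reach x y -> reach y z -> reach x z.
Proof. exact: connect_trans. Qed.

Lemma adjP u w : reflect (exists e, tl e = u /\ hd e = w) (adjr u w).
Proof.
apply: (iffP existsP) => [[e /andP[/eqP h1 /eqP h2]]|[e [h1 h2]]]; exists e => //.
by rewrite h1 h2 !eqxx.
Qed.

Lemma reach_last x y : reach x y -> x != y -> exists f, hd f = y /\ reach x (tl f).
Proof.
move=> /connectP [p Hp ->]; elim/last_ind: p Hp => [|p z _] Hp; first by rewrite eqxx.
rewrite last_rcons rcons_path in Hp *; case/andP: Hp => Hp /adjP [f [h1 h2]] _.
exists f; split => //; rewrite h1; apply/connectP; by exists p.
Qed.

Lemma reach_first x y : reach x y -> x != y -> exists f, tl f = x /\ reach (hd f) y.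
Proof.
move=> /connectP [[|z p] Hp ->] /=; first by rewrite eqxx.
case/andP: Hp => /adjP [f [h1 h2]] Hp _; exists f; split => //; rewrite h2.
apply/connectP; by exists p.
Qed.

Definition eP (e0 : E) (q : seq E) := path (fun e f => hd e == tl f) e0 q.

Lemma eP_reach e0 q : eP e0 q -> forall e, e \in e0 :: q ->
  reach (tl e0) (tl e) /\ reach (hd e) (hd (last e0 q)).
Proof.
elim: q e0 => [|e1 q IH] e0 /=.
  by move=> _ e; rewrite inE => /eqP ->; split; exact: reach_refl.
case/andP=> /eqP h Hq e; rewrite inE => /orP [/eqP ->|He].
  split; first exact: reach_refl.
  have [_ H2] := IH e1 Hq e1 (mem_head _ _).
  rewrite h; exact: reach_trans (reach_edge e1) H2.
have [H1 H2] := IH e1 Hq e He; split => //.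
apply: reach_trans (reach_edge e0) _; by rewrite h.
Qed.

Lemma reach_eP x y : reach x y -> x != y ->
  exists e0 q, [/\ tl e0 = x, eP e0 q & hd (last e0 q) = y].
Proof.
move=> /connectP [p Hp ->]; elim: p x Hp => [|z p IH] x /=; first by rewrite eqxx.
case/andP=> /adjP [f [h1 h2]] Hp _.
have [Hz|Hz] := eqVneq z (last z p).
  exists f, [::]; split => //=; by rewrite h2 {1}Hz.
have [e0 [q [a1 a2 a3]]] := IH z Hp Hz.
exists f, (e0 :: q); split => //=; by rewrite h2 a1 eqxx.
Qed.


Lemma first_cross (Q : pred V) e0 q : eP e0 q -> ~~ Q (tl e0) -> Q (hd (last e0 q)) ->
  exists q1, [/\ eP e0 q1, {subset e0 :: q1 <= e0 :: q}, ~~ Q (tl (last e0 q1)) &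
                 Q (hd (last e0 q1))].
Proof.
elim: q e0 => [|e1 q IH] e0 /=.
  move=> _ H1 H2; exists [::]; split => //.
case/andP=> /eqP h Hq Hn HQ.
case HQ0: (Q (hd e0)).
  exists [::]; split => //= x; rewrite inE => /eqP ->; exact: mem_head.
have Hn1 : ~~ Q (tl e1) by rewrite -h HQ0.
have [q1 [a1 a2 a3 a4]] := IH e1 Hq Hn1 HQ.
exists (e1 :: q1); split => //=.
- by rewrite h eqxx.
- move=> x; rewrite inE => /orP [/eqP ->|Hx]; first exact: mem_head.
  by rewrite inE (a2 x Hx) orbT.
Qed.

End Graph.

Import GRing.Theory.

Section Sym.
Variables (V E : finType) (tl hd : E -> V) (s : 'I_3 -> V).
Hypothesis Hac : forall e, ~~ reaches tl hd (hd e) (tl e).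
Hypothesis Hs : injective s.
Local Notation reach := (reaches tl hd).

Definition anc (e : E) := [set f | reach (hd f) (tl e)].

Lemma anc_lt f e : hd f = tl e -> (#|anc f| < #|anc e|)%N.
Proof.
move=> H; apply: proper_card; apply/properP; split.
  apply/subsetP => g; rewrite !inE => Hg; rewrite -H.
  exact: reach_trans Hg (reach_edge _ _ _).
exists f; first by rewrite inE H reach_refl.
by rewrite inE; exact: Hac.
Qed.

Variable F : fieldType.
Local Open Scope ring_scope.
Variables (k0 : E -> F) (k : E -> E -> F).

Definition step (sg : E -> ('I_3 -> F) -> F) (e : E) (X : 'I_3 -> F) : F :=
  if [pick i | s i == tl e] is Some i then k0 e * X i
  else \sum_(f | hd f == tl e) k f e * sg f X.

Definition itr n := iter n step (fun _ _ => 0).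

Lemma itr_stable n : forall e X m, (#|anc e| < n)%N -> (n <= m)%N -> itr m e X = itr n e X.
Proof.
elim: n => [//|n IH] e X [//|m] He Hm /=.
rewrite /step; case: pickP => // _.
apply: eq_bigr => f /eqP Hf; congr (_ * _).
apply: IH => //; apply: leq_trans (anc_lt Hf) _; by rewrite -ltnS.
Qed.

Definition symF := itr #|E|.+1.

Lemma anc_bound e : (#|anc e| < #|E|.+1)%N.
Proof. by rewrite ltnS max_card. Qed.

Lemma symF_eq e X : symF e X = step symF e X.
Proof.
rewrite /symF -[RHS]/(itr #|E|.+2 e X) (itr_stable X (anc_bound e)) //.
Qed.

Lemma symF_code : code_equations tl hd s k0 k symF.
Proof.
move=> X e; split.
  move=> i Hi; rewrite symF_eq /step; case: pickP => [j /eqP Hj|/(_ i)].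
    by rewrite (Hs (etrans Hj Hi)).
  by rewrite Hi eqxx.
move=> Hn; rewrite symF_eq /step; case: pickP => // j /eqP Hj.
by move/negP: Hn; case; apply/existsP; exists j; rewrite Hj.
Qed.

End Sym.


Definition pb (P : Prop) : bool := if excluded_middle_informative P then true else false.
Lemma pbP P : reflect P (pb P).
Proof. rewrite /pb; case: excluded_middle_informative => H; [exact: ReflectT|exact: ReflectF]. Qed.

Section Net.
Variables (V E : finType) (tl hd : E -> V) (s t : 'I_3 -> V).
Hypothesis Hnet : is_network tl hd s t.
Hypothesis Hdeg : forall v, ~~ is_src s v -> ~~ is_term t v ->
     (indeg hd v + outdeg tl v <= 3)%N.
Hypothesis Htype : forall v, ~~ has_type tl hd s t v 3 3 /\ ~~ has_type tl hd s t v 2 3 /\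
             ~~ has_type tl hd s t v 3 2.
Hypothesis Hpaths : forall i j, exists p q, is_path tl hd (s i) (t j) p /\
                           is_path tl hd (s i) (t j) q /\ edge_disjoint p q.

Hypothesis Hcol : #|colors22 tl hd s t| = 2.
Local Notation reach := (reaches tl hd).
Local Notation S := (src_set tl hd s).
Local Notation T := (term_set tl hd t).

Lemma acyc e : ~~ reach (hd e) (tl e). Proof. by case: Hnet => H _ _ _ _; apply: H. Qed.
Lemma sinj : injective s. Proof. by case: Hnet. Qed.
Lemma tinj : injective t. Proof. by case: Hnet. Qed.

Lemma no_in_src i e : hd e != s i.
Proof.
case: Hnet => _ _ _ H _; apply/negP => /eqP He.
have := H i; rewrite /indeg => /eqP; rewrite cards_eq0 => /eqP Hs.
by have := in_set0 e; rewrite -Hs inE He eqxx.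
Qed.

Lemma no_out_t j e : tl e != t j.
Proof.
case: Hnet => _ _ _ _ H; apply/negP => /eqP He.
have := H j; rewrite /outdeg => /eqP; rewrite cards_eq0 => /eqP Hs.
by have := in_set0 e; rewrite -Hs inE He eqxx.
Qed.

Lemma reach_to_src v i : reach v (s i) -> v = s i.
Proof.
move=> H; case: (eqVneq v (s i)) => // Hn.
by have [f [h _]] := reach_last H Hn; have := no_in_src i f; rewrite h eqxx.
Qed.

Lemma reach_from_t v j : reach (t j) v -> v = t j.
Proof.
move=> H; case: (eqVneq (t j) v) => // Hn.
by have [f [h _]] := reach_first H Hn; have := no_out_t j f; rewrite h eqxx.
Qed.

Lemma S_s i : S (s i) = [set i].
Proof.
apply/setP => x; rewrite !inE; apply/idP/eqP => [H|->]; last exact: reach_refl.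
exact: sinj (reach_to_src H).
Qed.

Lemma T_t j : T (t j) = [set j].
Proof.
apply/setP => x; rewrite !inE; apply/idP/eqP => [H|->]; last exact: reach_refl.
by apply: tinj; rewrite -(reach_from_t H).
Qed.

Lemma is_path_reach u w p : is_path tl hd u w p -> reach u w.
Proof.
case=> e0 [q [_ [h1 [h2 h3]]]].
have [_ H] := eP_reach h2 (mem_head e0 q); rewrite -h1 -h3.
apply: reach_trans H; exact: reach_edge.
Qed.

Lemma all_reach i j : reach (s i) (t j).
Proof. by have [p [q [H _]]] := Hpaths i j; exact: is_path_reach H. Qed.

Lemma T_s i : T (s i) = setT.
Proof. apply/setP => x; rewrite !inE; exact: all_reach. Qed.

Lemma S_mono u w : reach u w -> S u \subset S w.
Proof. move=> H; apply/subsetP => x; rewrite !inE => Hx; exact: reach_trans Hx H. Qed.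

Lemma T_mono u w : reach u w -> T w \subset T u.
Proof. move=> H; apply/subsetP => x; rewrite !inE => Hx; exact: reach_trans H Hx. Qed.

Lemma is_srcP v : reflect (exists i, v = s i) (is_src s v).
Proof.
apply: (iffP existsP) => [[i /eqP <-]|[i ->]]; by exists i.
Qed.

Lemma is_termP v : reflect (exists j, v = t j) (is_term t v).
Proof.
apply: (iffP existsP) => [[i /eqP <-]|[i ->]]; by exists i.
Qed.

Lemma S_in v i : ~~ is_src s v -> i \in S v -> exists f, hd f = v /\ i \in S (tl f).
Proof.
move=> Hv; rewrite inE => H.
have Hn : s i != v by apply/eqP => E1; move/negP: Hv; apply; apply/is_srcP; exists i.
have [f [h1 h2]] := reach_last H Hn; exists f; by rewrite inE.
Qed.

Lemma S_tl f : S (tl f) \subset S (hd f). Proof. exact/S_mono/reach_edge. Qed.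
Lemma T_hd f : T (hd f) \subset T (tl f). Proof. exact/T_mono/reach_edge. Qed.

Lemma cardS v : (#|S v| <= 3)%N.
Proof. by apply: leq_trans (max_card _) _; rewrite card_ord. Qed.
Lemma cardT v : (#|T v| <= 3)%N.
Proof. by apply: leq_trans (max_card _) _; rewrite card_ord. Qed.

Definition shared v := (2 <= #|T v|)%N.

Lemma shared_S v : shared v -> (#|S v| <= 2)%N.
Proof.
rewrite /shared => H; have [H1 [H2 H3]] := Htype v.
move: H1 H3; rewrite /has_type /c_s /c_t.
have := cardS v; have := cardT v.
move: H; case: #|T v| => [|[|[|[|n]]]] //; case: #|S v| => [|[|[|[|n']]]] //.
Qed.

Lemma pair_T v : shared v -> #|S v| = 2 -> #|T v| = 2.
Proof.
rewrite /shared => H Hs; have [H1 [H2 H3]] := Htype v.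
move: H2; rewrite /has_type /c_s /c_t Hs /=.
have := cardT v; move: H; case: #|T v| => [|[|[|[|n]]]] //.
Qed.

Lemma shared_s i : shared (s i).
Proof. by rewrite /shared T_s cardsT card_ord. Qed.

Lemma not_shared_t j : ~~ shared (t j).
Proof. by rewrite /shared T_t cards1. Qed.

Lemma src_cardS v : is_src s v -> #|S v| = 1%N.
Proof. by case/is_srcP => i ->; rewrite S_s cards1. Qed.

Lemma term_cardT v : is_term t v -> #|T v| = 1%N.
Proof. by case/is_termP => i ->; rewrite T_t cards1. Qed.

Definition pv u := (#|S u| == 2) && shared u.

Lemma pv_not_src u : pv u -> ~~ is_src s u.
Proof. case/andP => /eqP H _; apply/negP => /src_cardS; by rewrite H. Qed.

Lemma pv_not_term u : pv u -> ~~ is_term t u.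
Proof. case/andP => _ H; apply/negP => /term_cardT; move: H; rewrite /shared => H E1; by rewrite E1 in H. Qed.

Lemma shared_anc u w : reach u w -> shared w -> shared u.
Proof. rewrite /shared => H Hw; apply: leq_trans Hw _; exact/subset_leq_card/T_mono. Qed.


Definition spath e0 q u := [&& is_src s (tl e0), eP tl hd e0 q & hd (last e0 q) == u].
Definition K u := [set c | pb (forall e0 q, spath e0 q u -> c \in e0 :: q)].
Definition key c := (#|anc tl hd c| * #|E| + enum_rank c)%N.
Definition cut u : option E :=
  if [pick c in K u] is Some c0 then Some [arg min_(c < c0 in K u) key c]
  else [pick e | tl e == u].

Lemma inK c u : reflect (forall e0 q, spath e0 q u -> c \in e0 :: q) (c \in K u).
Proof. rewrite inE; exact: pbP. Qed.

Lemma cutK u c : c \in K u -> exists c',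
  [/\ cut u = Some c', c' \in K u & forall c'', c'' \in K u -> (key c' <= key c'')%N].
Proof.
move=> Hc; rewrite /cut; case: pickP => [c0 Hc0|/(_ c)]; last by rewrite Hc.
case: arg_minnP => //= c' Hc' Hmin; by exists c'.
Qed.

Lemma key_inj c1 c2 : key c1 = key c2 -> c1 = c2.
Proof.
rewrite /key => H.
have Hn : (0 < #|E|)%N by apply/card_gt0P; exists c1.
have := congr1 (fun x => x %% #|E|)%N H.
rewrite !modnMDl !modn_small ?ltn_ord // => /ord_inj; exact: enum_rank_inj.
Qed.

Lemma key_lt c1 c2 : (#|anc tl hd c1| < #|anc tl hd c2|)%N -> (key c1 < key c2)%N.
Proof.
rewrite /key => H; apply: (@leq_trans (#|anc tl hd c1|.+1 * #|E|)).
  by rewrite mulSn [X in (_ < X)%N]addnC ltn_add2l ltn_ord.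
by apply: leq_trans (leq_addr _ _); rewrite leq_mul2r H orbT.
Qed.

Lemma anc_lt' c f : reach (hd c) (tl f) -> (#|anc tl hd c| < #|anc tl hd f|)%N.
Proof.
move=> H; apply: proper_card; apply/properP; split.
  apply/subsetP => g; rewrite !inE => Hg.
  exact: reach_trans (reach_trans Hg (reach_edge _ _ _)) H.
exists c; first by rewrite inE.
by rewrite inE; exact: acyc.
Qed.

Lemma key_path e0 q c f : eP tl hd e0 q -> c \in e0 :: q -> hd (last e0 q) = tl f ->
  (key c < key f)%N.
Proof.
move=> Hq Hc Hl; apply: key_lt; apply: anc_lt'; rewrite -Hl.
by have [_ ->] := eP_reach Hq Hc.
Qed.

Lemma pv_shared u : pv u -> shared u. Proof. by case/andP. Qed.

Lemma out_le1 u : pv u -> (2 <= indeg hd u)%N -> (outdeg tl u <= 1)%N.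
Proof.
move=> Hp Hi; have := Hdeg (pv_not_src Hp) (pv_not_term Hp).
move: Hi; case: (indeg hd u) => [|[|n]] //= _.
by rewrite !addSn !ltnS; move/(leq_trans (leq_addl _ _)).
Qed.

Lemma cut_in e0 q : is_src s (tl e0) -> eP tl hd e0 q -> pv (tl (last e0 q)) ->
  exists c, cut (tl (last e0 q)) = Some c /\ c \in e0 :: q.
Proof.
move=> Hs; elim/last_ind: q => [|q1 g _] /=.
  by move=> _ Hpv; move: (pv_not_src Hpv); rewrite Hs.
rewrite last_rcons /eP rcons_path => /andP [Hq1 /eqP Hg] Hpv.
have Hsp : spath e0 q1 (tl g) by rewrite /spath Hs /eP Hq1 Hg eqxx.
have Hsub : {subset e0 :: q1 <= e0 :: rcons q1 g}.
  by move=> x; rewrite !inE mem_rcons !inE; case/orP => ->; rewrite ?orbT.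
case: (set_0Vmem (K (tl g))) => [K0|[c Hc]]; last first.
  have [c' [Hc' Hin _]] := cutK Hc; exists c'; split => //; apply: Hsub.
  exact: (elimT (inK _ _) Hin).
rewrite /cut; case: pickP => [c0|_]; first by rewrite K0 inE.
set u := tl g in Hg Hpv Hsp K0 *.
set h := last e0 q1 in Hg.
have [h' /andP [/eqP Hh' Hne]] : exists h', (hd h' == u) && (h' != h).
  case: (pickP (fun h' => (hd h' == u) && (h' != h))) => [h' H|H]; first by exists h'.
  have : h \in K u.
    apply/inK => e0' q' /and3P [_ _ /eqP Hl].
    have := H (last e0' q'); rewrite Hl eqxx /= => /negbFE /eqP <-; exact: mem_last.
  by rewrite K0 inE.
have Hin : (2 <= indeg hd u)%N.
  rewrite /indeg; apply: (@leq_trans #|[set h; h']|); first by rewrite cards2 eq_sym Hne.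
  by apply/subset_leq_card/subsetP => x; rewrite !inE => /orP [] /eqP ->; rewrite ?Hg ?Hh'.
have Hout := out_le1 Hpv Hin.
case: pickP => [o /eqP Ho|/(_ g)]; last by rewrite eqxx.
exists g; split; last by rewrite inE mem_rcons !inE eqxx !orbT.
move: Hout; rewrite /outdeg => /card_le1_eqP Hall.
congr Some; apply: Hall; by rewrite inE ?Ho.
Qed.

Lemma spath_ex u i : i \in S u -> ~~ is_src s u ->
  exists e0 q, [/\ tl e0 = s i, eP tl hd e0 q & hd (last e0 q) = u].
Proof.
rewrite inE => H Hu.
have Hn : s i != u by apply/eqP => E1; move/negP: Hu; apply; apply/is_srcP; exists i.
have [e0 [q [a b c]]] := reach_eP H Hn; by exists e0, q.
Qed.

Lemma pv_card u : pv u -> #|S u| = 2.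
Proof. by case/andP => /eqP. Qed.

Lemma mem_rc (x y z : E) q : (x \in y :: rcons q z) = (x == z) || (x \in y :: q).
Proof. by rewrite !inE mem_rcons !inE; case: (x == y); case: (x == z); rewrite ?orbT. Qed.

Lemma cut_copy u f0 : pv u -> hd f0 = u -> S (tl f0) = S u ->
  (forall f, hd f = u -> S (tl f) = set0 \/ (S (tl f) = S u /\ cut (tl f) = cut (tl f0))) ->
  cut u = cut (tl f0).
Proof.
move=> Hu Hf0 HS0 Hcopy; set v0 := tl f0.
have Hv0 : pv v0.
  rewrite /pv /v0 HS0 pv_card //=; apply: shared_anc (pv_shared Hu); rewrite -Hf0.
  exact: reach_edge.
have [i Hi] : exists i, i \in S v0.
  by apply/set0Pn; rewrite -card_gt0 pv_card.
have [e0 [q [He0 Hq Hl]]] := spath_ex Hi (pv_not_src Hv0).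
have Hsrc : is_src s (tl e0) by apply/is_srcP; exists i.
have Hq' : eP tl hd e0 (rcons q f0) by rewrite /eP rcons_path -/(eP tl hd e0 q) Hq /= Hl eqxx.
have Hpv0 : pv (tl (last e0 (rcons q f0))) by rewrite last_rcons.
have [cs [Hcs Hcsin]] := cut_in Hsrc Hq' Hpv0.
rewrite last_rcons -/v0 in Hcs.
have Hspu : spath e0 (rcons q f0) u by rewrite /spath Hsrc Hq' last_rcons Hf0 eqxx.
have HcK : cs \in K u.
  apply/inK => e1 q1 /and3P [Hs1 Hq1 /eqP Hl1].
  move: Hq1 Hl1; elim/last_ind: q1 => [|q2 g _] /=.
    move=> _ Hl1; have [H|[H _]] := Hcopy _ Hl1.
      by have := src_cardS Hs1; rewrite H cards0.
    by have := src_cardS Hs1; rewrite H pv_card.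
  rewrite last_rcons => Hq1 Hg.
  have [H|[H1 H2]] := Hcopy _ Hg.
    case/is_srcP: Hs1 => i1 Hi1.
    have [H3 _] := eP_reach Hq1 (mem_last e1 (rcons q2 g)); rewrite last_rcons Hi1 in H3.
    by have := in_set0 i1; rewrite -H inE H3.
  have Hpg : pv (tl g).
    rewrite /pv H1 pv_card //=; apply: shared_anc (pv_shared Hu); rewrite -Hg.
    exact: reach_edge.
  have Hpg' : pv (tl (last e1 (rcons q2 g))) by rewrite last_rcons.
  have [c [Hc Hcin]] := cut_in Hs1 Hq1 Hpg'.
  rewrite last_rcons H2 -/v0 Hcs in Hc; by case: Hc => ->.
have [c' [Hc' Hc'K Hmin]] := cutK HcK.
rewrite Hc' Hcs; congr Some; apply: key_inj; apply/eqP; rewrite eqn_leq Hmin //=.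
move: (Hc'K) => /inK /(_ _ _ Hspu); rewrite mem_rc => /orP [/eqP ->|Hc'in].
  move: Hcsin; rewrite mem_rc => /orP [/eqP ->//|Hcsq].
  by apply: ltnW; apply: key_path Hq Hcsq Hl.
have Hc'v : c' \in K v0.
  apply/inK => e1 q1 Hsp1.
  case/and3P: (Hsp1) => Hs1 Hq1 /eqP Hl1.
  have : spath e1 (rcons q1 f0) u by rewrite /spath Hs1 /eP rcons_path -/(eP tl hd e1 q1) Hq1 /= Hl1 last_rcons Hf0 !eqxx.
  move/inK: Hc'K => H /H; rewrite mem_rc => /orP [/eqP Heq|//].
  (* c' = f0 : but c' in e0 :: q *)
  have := key_path Hq Hc'in Hl; by rewrite Heq ltnn.
have [c'' [Hc'' _ Hmin']] := cutK Hc'v.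
rewrite -/v0 Hcs in Hc''; case: Hc'' => Heq; rewrite Heq; exact: Hmin'.
Qed.

Lemma subset2 (A : {set 'I_3}) lo hi : A \subset [set lo; hi] ->
  [\/ A = set0, A = [set lo], A = [set hi] | A = [set lo; hi]].
Proof.
move=> /subsetP H.
have Hx x : x \in A -> (x == lo) || (x == hi) by move/H; rewrite !inE.
case Hl: (lo \in A); case Hh: (hi \in A).
- apply: Or44; apply/setP => x; rewrite !inE; apply/idP/idP => [/Hx //|/orP [] /eqP ->] //.
- apply: Or42; apply/setP => x; rewrite !inE; apply/idP/idP => [Hxa|/eqP -> //].
  by case/orP: (Hx _ Hxa) => // /eqP E1; rewrite E1 Hh in Hxa.
- apply: Or43; apply/setP => x; rewrite !inE; apply/idP/idP => [Hxa|/eqP -> //].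
  by case/orP: (Hx _ Hxa) => // /eqP E1; rewrite E1 Hl in Hxa.
- apply: Or41; apply/setP => x; rewrite !inE; apply/negbTE/negP => Hxa.
  by case/orP: (Hx _ Hxa) => /eqP E1; rewrite E1 ?Hl ?Hh in Hxa.
Qed.

Lemma pair_lohi (A : {set 'I_3}) : #|A| = 2 -> exists lo hi, A = [set lo; hi] /\ (lo < hi)%N.
Proof.
move/eqP/cards2P => [x [y [Hxy ->]]].
case: (ltngtP x y) => H.
- by exists x, y.
- by exists y, x; rewrite setUC.
- by move: Hxy; rewrite (val_inj H) eqxx.
Qed.

Section Forms.
Variable F : fieldType.
Local Open Scope ring_scope.
Import GRing.Theory.
Variable om : option E -> F.
Hypothesis om_inj : injective om.
Hypothesis om_nz : forall x, om x != 0.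

Definition form (u : V) (x : 'I_3) : F :=
  if x \in S u then (if [exists y in S u, (y < x)%N] then om (cut u) else 1) else 0.

Lemma form_out u x : x \notin S u -> form u x = 0.
Proof. by rewrite /form => /negbTE ->. Qed.

Lemma form_single u i : S u = [set i] -> forall x, form u x = if x == i then 1 else 0.
Proof.
move=> H x; rewrite /form H inE; case: (eqVneq x i) => // ->.
case: existsP => // [[y /andP [Hy Hlt]]]; move: Hy; rewrite inE => /eqP E1.
by rewrite E1 ltnn in Hlt.
Qed.

Lemma form_pair u lo hi : S u = [set lo; hi] -> (lo < hi)%N ->
  form u lo = 1 /\ form u hi = om (cut u).
Proof.
move=> H Hlt; rewrite /form H !inE !eqxx ?orbT /=; split.
  case: existsP => // [[y /andP [Hy Hl]]]; move: Hy; rewrite !inE => /orP [] /eqP E1.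
    by rewrite E1 ltnn in Hl.
  by rewrite E1 in Hl; move: (ltn_trans Hl Hlt); rewrite ltnn.
case: existsP => // [] [] ; exists lo; by rewrite !inE eqxx Hlt.
Qed.

Lemma form_nz u x : x \in S u -> form u x != 0.
Proof. by rewrite /form => ->; case: existsP => _; rewrite ?om_nz ?oner_eq0. Qed.

Lemma sum2 u f g (a b : F) (phi : E -> F) : hd f = u -> hd g = u ->
  \sum_(h | hd h == u) ((if h == f then a else 0) + (if h == g then b else 0)) * phi h
  = a * phi f + b * phi g.
Proof.
move=> Hf Hg; rewrite (eq_bigr (fun h => (if h == f then a else 0) * phi h +
   (if h == g then b else 0) * phi h)); last by move=> h _; rewrite mulrDl.
rewrite big_split /=; congr (_ + _).
  rewrite (bigD1 f) /= ?Hf ?eqxx // big1 ?addr0 // => h /andP [_ /negbTE ->]; by rewrite mul0r.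
rewrite (bigD1 g) /= ?Hg ?eqxx // big1 ?addr0 // => h /andP [_ /negbTE ->]; by rewrite mul0r.
Qed.

Definition realizable u := exists c : E -> F,
  forall x, form u x = \sum_(f | hd f == u) c f * form (tl f) x.

Lemma comb2 u f g a b : hd f = u -> hd g = u ->
  (forall x, form u x = a * form (tl f) x + b * form (tl g) x) -> realizable u.
Proof.
move=> Hf Hg H; exists (fun h => (if h == f then a else 0) + (if h == g then b else 0)).
by move=> x; rewrite sum2.
Qed.

Lemma verify2 u lo hi f g a b : S u = [set lo; hi] -> hd f = u -> hd g = u ->
  form u lo = a * form (tl f) lo + b * form (tl g) lo ->
  form u hi = a * form (tl f) hi + b * form (tl g) hi ->
  forall x, form u x = a * form (tl f) x + b * form (tl g) x.
Proof.
move=> Hu Hf Hg Hlo Hhi x.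
case Hx: (x \in S u).
  by move: Hx; rewrite Hu !inE => /orP [] /eqP ->.
have Hn : x \notin S u by rewrite Hx.
have Hnf : x \notin S (tl f).
  by apply: contra Hn; apply/subsetP; rewrite -Hf; exact: S_tl.
have Hng : x \notin S (tl g).
  by apply: contra Hn; apply/subsetP; rewrite -Hg; exact: S_tl.
by rewrite !form_out // !mulr0 addr0.
Qed.


Lemma realize u : shared u -> ~~ is_src s u -> realizable u.
Proof.
move=> Hsh Hns.
have Hsub f : hd f = u -> S (tl f) \subset S u by move=> <-; exact: S_tl.
have := shared_S Hsh; rewrite leq_eqVlt ltnS leq_eqVlt ltnS leqn0 cards_eq0.
case/or3P => [/eqP H2|/eqP H1|/eqP H0].
-
  have Hpv : pv u by rewrite /pv H2 eqxx Hsh.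
  have [lo [hi [HP Hlt]]] := pair_lohi H2.
  have Hlh : lo != hi by apply/eqP => E1; rewrite E1 ltnn in Hlt.
  have [wu1 wu2] := form_pair HP Hlt.
  have Hsub' f : hd f = u -> S (tl f) \subset [set lo; hi] by rewrite -HP; exact: Hsub.
  have [fl [Hfl Hlf]] : exists f, hd f = u /\ lo \in S (tl f).
    by apply: S_in => //; rewrite HP !inE eqxx.
  have [fh [Hfh Hhf]] : exists f, hd f = u /\ hi \in S (tl f).
    by apply: S_in => //; rewrite HP !inE eqxx orbT.
  have cls f : hd f = u -> [\/ S (tl f) = set0, S (tl f) = [set lo], S (tl f) = [set hi]
     | S (tl f) = [set lo; hi]] by move=> Hf; apply: subset2; exact: Hsub'.
  have sl f : S (tl f) = [set lo] -> form (tl f) lo = 1 /\ form (tl f) hi = 0.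
    by move=> H; rewrite !(form_single H) eqxx eq_sym (negbTE Hlh).
  have sh f : S (tl f) = [set hi] -> form (tl f) lo = 0 /\ form (tl f) hi = 1.
    by move=> H; rewrite !(form_single H) eqxx (negbTE Hlh).
  have sp f : S (tl f) = [set lo; hi] -> form (tl f) lo = 1 /\ form (tl f) hi = om (cut (tl f)).
    by move=> H; exact: form_pair H Hlt.
  have caseA f g : hd f = u -> hd g = u -> S (tl f) = [set lo] -> S (tl g) = [set hi] ->
      realizable u.
    move=> Hf Hg Sf Sg; have [f1 f2] := sl _ Sf; have [g1 g2] := sh _ Sg.
    apply: (comb2 (a := 1) (b := om (cut u)) Hf Hg); apply: (verify2 HP) => //.
      by rewrite wu1 f1 g1 mulr1 mulr0 addr0.
    by rewrite wu2 f2 g2 mulr1 mulr0 add0r.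
  have caseB f g : hd f = u -> hd g = u -> S (tl f) = [set lo; hi] -> S (tl g) = [set lo] ->
      realizable u.
    move=> Hf Hg Sf Sg; have [f1 f2] := sp _ Sf; have [g1 g2] := sl _ Sg.
    have Hn := om_nz (cut (tl f)).
    apply: (comb2 (a := om (cut u) / om (cut (tl f))) (b := 1 - om (cut u) / om (cut (tl f)))
      Hf Hg); apply: (verify2 HP) => //.
      by rewrite wu1 f1 g1 !mulr1 addrC subrK.
    by rewrite wu2 f2 g2 mulr0 addr0 divfK.
  have caseC f g : hd f = u -> hd g = u -> S (tl f) = [set lo; hi] -> S (tl g) = [set hi] ->
      realizable u.
    move=> Hf Hg Sf Sg; have [f1 f2] := sp _ Sf; have [g1 g2] := sh _ Sg.
    apply: (comb2 (a := 1) (b := om (cut u) - om (cut (tl f))) Hf Hg); apply: (verify2 HP) => //.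
      by rewrite wu1 f1 g1 mulr1 mulr0 addr0.
    by rewrite wu2 f2 g2 mul1r mulr1 addrC subrK.
  have caseD f g : hd f = u -> hd g = u -> S (tl f) = [set lo; hi] -> S (tl g) = [set lo; hi] ->
      cut (tl f) != cut (tl g) -> realizable u.
    move=> Hf Hg Sf Sg Hne; have [f1 f2] := sp _ Sf; have [g1 g2] := sp _ Sg.
    set wf := om (cut (tl f)) in f2 *; set wg := om (cut (tl g)) in g2 *.
    set w := om (cut u) in wu2 *.
    have Hd : wf - wg != 0.
      by rewrite subr_eq0; apply: contra Hne => /eqP /om_inj ->.
    apply: (comb2 (a := (w - wg) / (wf - wg)) (b := (wf - w) / (wf - wg)) Hf Hg).
    apply: (verify2 HP) => //.
      by rewrite wu1 f1 g1 !mulr1 -mulrDl addrC addrA subrK divff.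
    rewrite wu2 f2 g2 ![_ / _ * _]mulrAC -mulrDl; apply/esym; apply: (canLR (mulfK Hd)).
    by rewrite !mulrBl !mulrBr [wf * wg]mulrC addrA subrK.
  have caseE f : hd f = u -> cut (tl f) = cut u -> S (tl f) = [set lo; hi] -> realizable u.
    move=> Hf Hc Sf; have [f1 f2] := sp _ Sf.
    apply: (comb2 (a := 1) (b := 0) Hf Hf); apply: (verify2 HP) => //.
      by rewrite wu1 f1 mulr1 mul0r addr0.
    by rewrite wu2 f2 Hc mul1r mul0r addr0.
  case: (cls _ Hfl) => Sl; first (by rewrite Sl inE in Hlf);
    last 2 first; [by move: Hlf; rewrite Sl inE => /eqP E1; rewrite E1 eqxx in Hlh | | ].
  +
    case: (cls _ Hfh) => Sh; first (by rewrite Sh inE in Hhf);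
      [by move: Hhf; rewrite Sh inE => /eqP E1; rewrite E1 eqxx in Hlh
      | exact: caseC Hfl Hfh Sl Sh | ].
    case: (pickP (fun g => (hd g == u) && (S (tl g) == [set lo]))) => [g /andP [/eqP Hg /eqP Sg]|NL].
      exact: caseB Hfl Hg Sl Sg.
    case: (pickP (fun g => (hd g == u) && (S (tl g) == [set hi]))) => [g /andP [/eqP Hg /eqP Sg]|NH].
      exact: caseC Hfl Hg Sl Sg.
    case: (pickP (fun g => [&& hd g == u, S (tl g) == [set lo; hi] & cut (tl g) != cut (tl fl)]))
      => [g /and3P [/eqP Hg /eqP Sg Hne]|ND].
      by apply: caseD Hfl Hg Sl Sg _; rewrite eq_sym.
    suff Hc : cut (tl fl) = cut u by exact: caseE Hfl Hc Sl.
    symmetry; apply: cut_copy Hpv Hfl _ _; first by rewrite Sl HP.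
    move=> g Hg; case: (cls _ Hg) => Sg.
    * by left.
    * by have := NL g; rewrite Hg Sg !eqxx.
    * by have := NH g; rewrite Hg Sg !eqxx.
    * right; split; first by rewrite Sg HP.
      by have := ND g; rewrite Hg Sg !eqxx /= => /negbFE /eqP.
  +
    case: (cls _ Hfh) => Sh; first (by rewrite Sh inE in Hhf);
      [by move: Hhf; rewrite Sh inE => /eqP E1; rewrite E1 eqxx in Hlh
      | exact: caseA Hfl Hfh Sl Sh | exact: caseB Hfh Hfl Sh Sl].
-
  move/eqP/cards1P: H1 => [i Hi].
  have [f [Hf Hif]] : exists f, hd f = u /\ i \in S (tl f) by apply: S_in => //; rewrite Hi inE.
  have Sf : S (tl f) = [set i].
    apply/eqP; rewrite eqEsubset -Hi (Hsub _ Hf) /=; by rewrite Hi sub1set.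
  apply: (comb2 (a := 1) (b := 0) Hf Hf) => x.
  by rewrite (form_single Hi) (form_single Sf) mul1r mul0r addr0.
-
  exists (fun _ => 0) => x; rewrite form_out ?H0 ?inE //.
  by rewrite big1 // => f _; rewrite mul0r.
Qed.


Lemma alg_L (ai al bi bl ri rl : F) : ai * bl - al * bi != 0 ->
  (ri * bl - rl * bi) / (ai * bl - al * bi) * ai + (ai * rl - al * ri) / (ai * bl - al * bi) * bi = ri /\
  (ri * bl - rl * bi) / (ai * bl - al * bi) * al + (ai * rl - al * ri) / (ai * bl - al * bi) * bl = rl.
Proof.
move=> HD; set D := ai * bl - al * bi.
rewrite ![_ / D * _]mulrAC -!mulrDl; split; apply: (canLR (mulfK HD)); rewrite /D.
- rewrite !mulrBl !mulrBr [ai * rl]mulrC [rl * ai * bi]mulrAC addrA subrK.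
  by rewrite [ri * bl * ai]mulrAC [al * ri]mulrC !mulrA.
- rewrite !mulrBl !mulrBr [al * ri]mulrC [ri * al * bl]mulrAC addrC addrA subrK.
  by rewrite [ai * rl]mulrC [rl * bi * al]mulrAC !mulrA.
Qed.

Lemma lin3 (i l k : 'I_3) (a b c : 'I_3 -> F) : (forall x, [\/ x = i, x = l | x = k]) ->
  a k = 0 -> b k = 0 -> a i * b l - a l * b i != 0 -> c k != 0 ->
  exists la lb lc, forall x, la * a x + lb * b x + lc * c x = 1.
Proof.
move=> Hx ak bk HD ck.
set lc := (c k)^-1; set r := fun x => 1 - lc * c x.
have [H1 H2] := alg_L (r i) (r l) HD.
exists ((r i * b l - r l * b i) / (a i * b l - a l * b i)),
       ((a i * r l - a l * r i) / (a i * b l - a l * b i)), lc => x.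
case: (Hx x) => ->.
- by rewrite H1 /r subrK.
- by rewrite H2 /r subrK.
- by rewrite ak bk !mulr0 !add0r mulVf.
Qed.

Lemma third (i l : 'I_3) : i != l -> exists k, (k != i) && (k != l) /\ forall x, [\/ x = i, x = l | x = k].
Proof.
move=> Hil.
have : #|~: [set i; l]| = 1%N.
  by have := cardsC [set i; l]; rewrite cards2 Hil card_ord; case.
move/eqP/cards1P => [k Hk].
have Hkin : k \in ~: [set i; l] by rewrite Hk inE.
exists k; split.
  by move: Hkin; rewrite !inE negb_or.
move=> x; case Hx: (x \in ~: [set i; l]).
  by move: Hx; rewrite Hk inE => /eqP ->; apply: Or33.
by move: Hx; rewrite !inE negb_or => /negbT; rewrite negb_and !negbK => /orP [] /eqP ->;
  [apply: Or31|apply: Or32].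
Qed.

Definition Bj j := [set e | shared (tl e) & T (hd e) == [set j]].

Lemma shared_of v j : j \in T v -> T v != [set j] -> shared v.
Proof.
move=> Hj Hn; rewrite /shared ltnNge; apply/negP => H; move/negP: Hn; apply.
by rewrite eq_sym eqEcard sub1set Hj cards1.
Qed.

Lemma ext_b m j p : is_path tl hd (s m) (t j) p -> exists e0 q1,
  [/\ tl e0 = s m, eP tl hd e0 q1, {subset e0 :: q1 <= p} & last e0 q1 \in Bj j].
Proof.
case=> e0 [q [-> [h1 [h2 h3]]]].
have Hn : ~~ (fun v => T v == [set j]) (tl e0).
  rewrite /= h1 T_s; apply/negP => /eqP H.
  by have := cards1 j; rewrite -H cardsT card_ord.
have Hq : (fun v => T v == [set j]) (hd (last e0 q)) by rewrite /= h3 T_t.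
have [q1 [a1 a2 a3 a4]] := @first_cross _ _ tl hd (fun v => T v == [set j]) _ _ h2 Hn Hq.
exists e0, q1; split => //.
rewrite inE a4 andbT; apply: (shared_of (j := j)) => //.
by apply: (subsetP (T_hd _)); rewrite (eqP a4) inE.
Qed.

Lemma data m j : exists b b', [/\ b \in Bj j, b' \in Bj j, m \in S (tl b), m \in S (tl b') &
  (pv (tl b) -> pv (tl b') -> cut (tl b) != cut (tl b'))].
Proof.
have [p [q [Hp [Hq Hd]]]] := Hpaths m j.
have [e0 [q1 [a1 a2 a3 a4]]] := ext_b Hp.
have [e0' [q1' [b1 b2 b3 b4]]] := ext_b Hq.
exists (last e0 q1), (last e0' q1'); split => //.
- by have [H _] := eP_reach a2 (mem_last e0 q1); rewrite inE -a1.
- by have [H _] := eP_reach b2 (mem_last e0' q1'); rewrite inE -b1.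
move=> P1 P2.
have Hs1 : is_src s (tl e0) by apply/is_srcP; exists m.
have Hs2 : is_src s (tl e0') by apply/is_srcP; exists m.
have [c [Hc Hcin]] := cut_in Hs1 a2 P1.
have [c' [Hc' Hcin']] := cut_in Hs2 b2 P2.
rewrite Hc Hc'; apply/eqP => [[E1]].
by have := Hd c (a3 _ Hcin); rewrite E1 (b3 _ Hcin').
Qed.


Lemma color_in v : pv v -> color tl hd s t v \in colors22 tl hd s t.
Proof.
move=> Hv; apply/imsetP; exists v => //; rewrite inE /has_type /c_s /c_t.
by rewrite (pv_card Hv) (pair_T (pv_shared Hv) (pv_card Hv)) !eqxx.
Qed.

Lemma two_pairs v1 v2 v3 : pv v1 -> pv v2 -> pv v3 -> [\/ S v1 = S v2, S v1 = S v3 | S v2 = S v3].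
Proof.
move=> H1 H2 H3.
case: (eqVneq (S v1) (S v2)) => [|n12]; first by move=> ?; apply: Or31.
case: (eqVneq (S v1) (S v3)) => [|n13]; first by move=> ?; apply: Or32.
case: (eqVneq (S v2) (S v3)) => [|n23]; first by move=> ?; apply: Or33.
set c1 := color tl hd s t v1; set c2 := color tl hd s t v2; set c3 := color tl hd s t v3.
have d12 : c1 != c2 by apply: contra n12 => /eqP/(congr1 fst) /= ->.
have d13 : c1 != c3 by apply: contra n13 => /eqP/(congr1 fst) /= ->.
have d23 : c2 != c3 by apply: contra n23 => /eqP/(congr1 fst) /= ->.
have : (#|c1 |: (c2 |: [set c3])| <= #|colors22 tl hd s t|)%N.
  apply/subset_leq_card/subsetP => x; rewrite !inE => /orP [|/orP []] /eqP ->; apply: color_in => //.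
by rewrite Hcol !cardsU1 cards1 !inE negb_or d12 d13 d23.
Qed.

Lemma pair_eq (P : {set 'I_3}) m1 m2 : #|P| = 2 -> m1 != m2 -> m1 \in P -> m2 \in P ->
  P = [set m1; m2].
Proof.
move=> HP Hm H1 H2; apply/eqP; rewrite eq_sym eqEcard HP cards2 Hm leqnn andbT.
by apply/subsetP => x; rewrite !inE => /orP [] /eqP ->.
Qed.

Definition spanj j := exists La : E -> F, (forall e, La e != 0 -> e \in Bj j) /\
     forall x, \sum_e La e * form (tl e) x = 1.

Lemma build j b1 b2 b3 (la lb lc : F) : b1 \in Bj j -> b2 \in Bj j -> b3 \in Bj j ->
  (forall x, la * form (tl b1) x + lb * form (tl b2) x + lc * form (tl b3) x = 1) -> spanj j.
Proof.
move=> H1 H2 H3 H; exists (fun e => (if e == b1 then la else 0) + (if e == b2 then lb else 0)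
   + (if e == b3 then lc else 0)); split.
  move=> e; case: (eqVneq e b1) => [->//|_]; case: (eqVneq e b2) => [->//|_].
  by case: (eqVneq e b3) => [->//|_]; rewrite !addr0 eqxx.
move=> x; rewrite -(H x).
have one b (l : F) : \sum_e (if e == b then l else 0) * form (tl e) x = l * form (tl b) x.
  by rewrite (bigD1 b) //= eqxx big1 ?addr0 // => e /negbTE ->; rewrite mul0r.
rewrite (eq_bigr (fun e => (if e == b1 then la else 0) * form (tl e) x +
  (if e == b2 then lb else 0) * form (tl e) x + (if e == b3 then lc else 0) * form (tl e) x));
  last by move=> e _; rewrite !mulrDl.
by rewrite !big_split /= !one.
Qed.

Lemma terminal_span j : spanj j.
Proof.
have Hex k : exists b, b \in Bj j /\ k \in S (tl b).
  by have [b [b' [H1 _ H3 _ _]]] := data k j; exists b.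
have patA i l bi bl : i != l -> bi \in Bj j -> bl \in Bj j -> S (tl bi) = [set i] ->
    S (tl bl) = [set l] -> spanj j.
  move=> Hil Hbi Hbl Si Sl; have [k [/andP [Hki Hkl] Hx]] := third Hil.
  have [bk [Hbk Hk]] := Hex k.
  have ak : form (tl bi) k = 0 by rewrite (form_single Si) (negbTE Hki).
  have bk0 : form (tl bl) k = 0 by rewrite (form_single Sl) (negbTE Hkl).
  have HD : form (tl bi) i * form (tl bl) l - form (tl bi) l * form (tl bl) i != 0.
    rewrite !(form_single Si) !(form_single Sl) !eqxx eq_sym (negbTE Hil) mul1r mulr0 subr0.
    by rewrite eq_sym oner_eq0.
  have [la [lb [lc H]]] := lin3 Hx ak bk0 HD (form_nz Hk).
  exact: build Hbi Hbl Hbk H.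
have patB b b' : b \in Bj j -> b' \in Bj j -> pv (tl b) -> pv (tl b') -> S (tl b) = S (tl b') ->
    cut (tl b) != cut (tl b') -> spanj j.
  move=> Hb Hb' Pb Pb' HS Hne; have [lo [hi [HP Hlt]]] := pair_lohi (pv_card Pb).
  have Hlh : lo != hi by apply/eqP => E1; rewrite E1 ltnn in Hlt.
  have [k [/andP [Hkl Hkh] Hx]] := third Hlh.
  have [bk [Hbk Hk]] := Hex k.
  have HP' : S (tl b') = [set lo; hi] by rewrite -HS.
  have [a1 a2] := form_pair HP Hlt; have [b1 b2] := form_pair HP' Hlt.
  have ak : form (tl b) k = 0 by rewrite form_out // HP !inE negb_or Hkl Hkh.
  have bk0 : form (tl b') k = 0 by rewrite form_out // HP' !inE negb_or Hkl Hkh.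
  have HD : form (tl b) lo * form (tl b') hi - form (tl b) hi * form (tl b') lo != 0.
    rewrite a1 a2 b1 b2 mul1r mulr1 subr_eq0; apply: contra Hne => /eqP /om_inj ->.
    by rewrite eqxx.
  have [la [lb [lc H]]] := lin3 Hx ak bk0 HD (form_nz Hk).
  exact: build Hb Hb' Hbk H.
pose sing m := [exists b, (b \in Bj j) && (S (tl b) == [set m])].
have singP m : sing m -> exists b, b \in Bj j /\ S (tl b) = [set m].
  by case/existsP => b /andP [H1 /eqP H2]; exists b.
have Htwo i l : i != l -> sing i -> sing l -> spanj j.
  move=> Hil /singP [bi [Hbi Si]] /singP [bl [Hbl Sl]]; exact: patA Hil Hbi Hbl Si Sl.
have nsing m : ~~ sing m -> exists b b', [/\ b \in Bj j, b' \in Bj j, pv (tl b) /\ pv (tl b'),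
    m \in S (tl b) /\ m \in S (tl b') & cut (tl b) != cut (tl b')].
  move=> Hn; have [b [b' [Hb Hb' Hm Hm' Hc]]] := data m j.
  have pvof c : c \in Bj j -> m \in S (tl c) -> pv (tl c).
    move=> Hcj Hmc; have Hsh : shared (tl c) by move: Hcj; rewrite inE => /andP [].
    rewrite /pv Hsh andbT eqn_leq shared_S //=; rewrite ltnNge; apply/negP => Hle.
    have Hc1 : #|S (tl c)| = 1%N.
      by apply/eqP; rewrite eqn_leq Hle /= card_gt0; apply/set0Pn; exists m.
    move/eqP/cards1P: Hc1 => [y Hy]; move: (Hmc); rewrite Hy inE => /eqP Hmy.
    move/negP: Hn; apply; apply/existsP; exists c; by rewrite Hcj Hy Hmy eqxx.
  have P1 := pvof _ Hb Hm; have P2 := pvof _ Hb' Hm'.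
  by exists b, b'; split => //; apply: Hc.
have main m1 m2 : m1 != m2 -> ~~ sing m1 -> ~~ sing m2 -> spanj j.
  move=> H12 N1 N2.
  have [b [b' [Hb Hb' [Pb Pb'] [M1 M1'] Hc]]] := nsing _ N1.
  case: (eqVneq (S (tl b)) (S (tl b'))) => [E1|n1]; first exact: patB Hb Hb' Pb Pb' E1 Hc.
  have [c [c' [Hc0 Hc0' [Pc Pc'] [M2 M2'] Hcc]]] := nsing _ N2.
  case: (eqVneq (S (tl c)) (S (tl c'))) => [E2|n2]; first exact: patB Hc0 Hc0' Pc Pc' E2 Hcc.
  exfalso.
  have eqs (P Q : {set 'I_3}) : #|P| = 2 -> #|Q| = 2 -> m1 \in P -> m2 \in P -> m1 \in Q -> m2 \in Q -> P = Q.
    by move=> cP cQ a1 a2 a3 a4; rewrite (pair_eq cP H12 a1 a2) (pair_eq cQ H12 a3 a4).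
  case: (two_pairs Pb Pb' Pc) => [E1|E1|E1]; first by rewrite E1 eqxx in n1.
  + case: (two_pairs Pb Pb' Pc') => [E3|E3|E3]; first by rewrite E3 eqxx in n1.
      by move: n2; rewrite -E1 -E3 eqxx.
    have m2b : m2 \in S (tl b) by rewrite E1.
    have m2b' : m2 \in S (tl b') by rewrite E3.
    have E4 := eqs _ _ (pv_card Pb) (pv_card Pb') M1 m2b M1' m2b'.
    by rewrite E4 eqxx in n1.
  + case: (two_pairs Pb Pb' Pc') => [E3|E3|E3]; first by rewrite E3 eqxx in n1.
      have m2b : m2 \in S (tl b) by rewrite E3.
      have m2b' : m2 \in S (tl b') by rewrite E1.
      have E4 := eqs _ _ (pv_card Pb) (pv_card Pb') M1 m2b M1' m2b'.
      by rewrite E4 eqxx in n1.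
    by move: n2; rewrite -E1 -E3 eqxx.
pose o0 := @Ordinal 3 0 isT; pose o1 := @Ordinal 3 1 isT; pose o2 := @Ordinal 3 2 isT.
have d01 : o0 != o1 by []. have d02 : o0 != o2 by []. have d12 : o1 != o2 by [].
case S0: (sing o0); case S1: (sing o1); case S2: (sing o2).
- exact: Htwo d01 S0 S1.
- exact: Htwo d01 S0 S1.
- exact: Htwo d02 S0 S2.
- by apply: main d12 _ _; rewrite ?S1 ?S2.
- exact: Htwo d12 S1 S2.
- by apply: main d02 _ _; rewrite ?S0 ?S2.
- by apply: main d01 _ _; rewrite ?S0 ?S1.
- by apply: main d01 _ _; rewrite ?S0 ?S1.
Qed.

Lemma sum_delta (i : 'I_3) (X : 'I_3 -> F) :
  \sum_x (if x == i then 1 else 0) * X x = X i.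
Proof. by rewrite (bigD1 i) //= eqxx mul1r big1 ?addr0 // => x /negbTE ->; rewrite mul0r. Qed.

Lemma sum3 (X : 'I_3 -> F) : \sum_x X x = X 0 + X 1 + X 2.
Proof.
rewrite !big_ord_recr big_ord0 /= GRing.add0r; congr (_ + _ + _); congr X; exact: val_inj.
Qed.

Lemma code_exists : linear_code_sum tl hd s t F.
Proof.
have : forall u, exists c : E -> F, shared u -> ~~ is_src s u ->
    forall x, form u x = \sum_(f | hd f == u) c f * form (tl f) x.
  move=> u; case: (boolP (shared u && ~~ is_src s u)) => [/andP [H1 H2]|H].
    by have [c Hc] := realize H1 H2; exists c.
  by exists (fun _ => 0) => H1 H2; move: H; rewrite H1 H2.
move/fin_all_exists => [cc Hcc].
have : forall j, exists La : E -> F, (forall e, La e != 0 -> e \in Bj j) /\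
    forall x, \sum_e La e * form (tl e) x = 1 by exact: terminal_span.
move/fin_all_exists => [La HLa].
pose lam e := \sum_j La j e.
pose w f := if shared (tl f) then lam f else 1.
pose pickOut v := [pick f | (tl f == v) && (T (hd f) == T v)].
pose chosen e := pickOut (tl e) == Some e.
pose k0 := fun _ : E => (1 : F).
pose k f e := if shared (tl e) then cc (tl e) f else (if chosen e then w f else 0).
pose sym := symF tl hd s k0 k.
have Hcode : code_equations tl hd s k0 k sym := @symF_code _ _ tl hd s acyc sinj F k0 k.
have sym_src e X i : tl e = s i -> sym e X = X i.
  by move=> H; rewrite ((Hcode X e).1 i H) /k0 mul1r.
have sym_nsrc e X : ~~ is_src s (tl e) -> sym e X = \sum_(f | hd f == tl e) k f e * sym f X.
  by move=> H; rewrite ((Hcode X e).2 H).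
have sym_sh : forall e X, shared (tl e) -> sym e X = \sum_x form (tl e) x * X x.
  move=> e X; move: {2}#|anc tl hd e|.+1 (ltnSn #|anc tl hd e|) => n.
  elim: n e => [//|n IH] e Hn Hsh.
  case: (boolP (is_src s (tl e))) => [/is_srcP [i Hi]|Hns].
    by rewrite (sym_src _ _ _ Hi) Hi (eq_bigr _ (fun x _ => congr1 (fun y => y * X x) (form_single (S_s i) x))) sum_delta.
  rewrite sym_nsrc // /k Hsh.
  rewrite (eq_bigr (fun f => cc (tl e) f * \sum_x form (tl f) x * X x)); last first.
    move=> f /eqP Hf; congr (_ * _); apply: IH.
      by apply: leq_trans (anc_lt acyc Hf) _; rewrite -ltnS.
    by apply: shared_anc Hsh; rewrite -Hf; exact: reach_edge.
  rewrite (eq_bigr (fun f => \sum_x cc (tl e) f * form (tl f) x * X x)); last first.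
    by move=> f _; rewrite mulr_sumr; apply: eq_bigr => x _; rewrite mulrA.
  rewrite exchange_big /=; apply: eq_bigr => x _; rewrite (Hcc _ Hsh Hns x) mulr_suml //.
exists k0, k, sym; split => //.
move=> j; exists (fun y => \sum_(f | hd f == t j) w f * y f) => X.
rewrite (eq_bigr (fun f => w f * sym f X)); last by move=> f /eqP ->; rewrite eqxx.
pose Pj := [set v | T v == [set j]].
pose Pr := Pj :\ t j.
have nsh_Pj v : v \in Pj -> ~~ shared v.
  by rewrite inE /shared => /eqP ->; rewrite cards1.
have shP v : shared v -> v \notin Pj by move=> H; apply: contraL H; exact: nsh_Pj.
have Pj_nsrc v : v \in Pj -> ~~ is_src s v.
  move=> H; apply/negP => /is_srcP [i Hi]; move/negP: (nsh_Pj _ H); apply; rewrite Hi.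
  exact: shared_s.
have tPj : t j \in Pj by rewrite inE T_t.
have tl_Pr f : tl f \in Pj -> tl f \in Pr.
  by move=> H; rewrite in_setD1 H andbT; exact: no_out_t.
have hdPj f : hd f \in Pj -> ~~ shared (tl f) -> tl f \in Pj.
  rewrite !inE => /eqP Hh Hn; rewrite eq_sym eqEcard.
  have Hsub := T_hd f; rewrite Hh in Hsub; rewrite Hsub cards1.
  by move: Hn; rewrite /shared -ltnNge ltnS.
have sym_priv e : tl e \in Pj -> sym e X = if chosen e then \sum_(f | hd f == tl e) w f * sym f X else 0.
  move=> H; rewrite sym_nsrc ?Pj_nsrc // /k (negbTE (nsh_Pj _ H)).
  case: (chosen e) => //; by rewrite big1 // => f _; rewrite mul0r.
have chosenT e : chosen e -> T (hd e) = T (tl e).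
  rewrite /chosen /pickOut; case: pickP => // f /andP [/eqP Ht /eqP H] /eqP [E1]; by rewrite -E1 Ht.
have one_out v : v \in Pr -> exists f0, pickOut v = Some f0 /\ tl f0 = v.
  rewrite !inE => /andP [Hvt /eqP Hv].
  have Hr : reach v (t j) by have := set11 j; rewrite -Hv inE.
  have [f [Hf Hfr]] := reach_first Hr Hvt.
  rewrite /pickOut; case: pickP => [f0 /andP [/eqP H0 _]|/(_ f)]; first by exists f0.
  rewrite Hf eqxx /= Hv => /negbT/negP; case; rewrite eq_sym eqEcard cards1.
  have Hsub := T_hd f; rewrite Hf Hv in Hsub.
  by rewrite sub1set inE Hfr /=; apply: leq_trans (subset_leq_card Hsub) _; rewrite cards1.
have D2 : \sum_(e | tl e \in Pr) sym e X = \sum_(f | hd f \in Pr) w f * sym f X.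
  rewrite (partition_big tl (mem Pr)) // [RHS](partition_big hd (mem Pr)) //.
  apply: eq_bigr => v Hv.
  have [f0 [Hp0 Ht0]] := one_out v Hv.
  have HvPj : v \in Pj by move: Hv; rewrite !inE => /andP [].
  rewrite (eq_bigl (fun e => tl e == v)); last by move=> e; rewrite andbC; case: eqP => //= ->.
  rewrite [RHS](eq_bigl (fun f => hd f == v)); last by move=> e; rewrite andbC; case: eqP => //= ->.
  rewrite (bigD1 f0) ?Ht0 //= big1 ?addr0.
    by rewrite sym_priv ?Ht0 // /chosen Ht0 Hp0 eqxx.
  move=> e /andP [/eqP He Hne]; rewrite sym_priv ?He // /chosen He Hp0.
  by case: eqP => // [[E1]]; rewrite E1 eqxx in Hne.
have Hsupp e : La j e != 0 -> e \in Bj j := (HLa j).1 e.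
have lamE e : e \in Bj j -> lam e = La j e.
  move=> He; rewrite /lam (bigD1 j) //= big1 ?addr0 // => j' Hj'.
  apply/eqP; apply/negP => Hnz; have := (HLa j').1 e (introN idP Hnz).
  rewrite inE => /andP [_ /eqP H2]; move: He; rewrite inE => /andP [_ /eqP H1].
  rewrite H1 in H2; move: Hj'; by rewrite (set1_inj H2) eqxx.
have PrP v : (v \in Pr) = (v != t j) && (v \in Pj) by rewrite in_setD1.
have Bjsh f : f \in Bj j -> shared (tl f) by rewrite inE => /andP [].
have BjP f : (f \in Bj j) = shared (tl f) && (hd f \in Pj) by rewrite !inE.
have keyf f : (if hd f == t j then w f * sym f X else 0) =
   (if f \in Bj j then lam f * sym f X else 0) + (if tl f \in Pr then sym f X else 0)
     - (if hd f \in Pr then w f * sym f X else 0).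
  rewrite BjP !PrP /w; case Hsh: (shared (tl f)).
    have Hn := shP _ Hsh; rewrite (negbTE Hn) andbF /= addr0.
    case: (eqVneq (hd f) (t j)) => [->|Hne]; first by rewrite tPj /= subr0.
    by case: (hd f \in Pj); rewrite /= ?subrr ?subr0.
  rewrite /= add0r mul1r.
  case: (eqVneq (hd f) (t j)) => [Hh|Hne] /=.
    have HhP : hd f \in Pj by rewrite Hh.
    have Ht := hdPj f HhP (negbT Hsh).
    by rewrite Ht andbT (no_out_t j f) subr0.
  case Hh: (hd f \in Pj).
    have Ht := hdPj f Hh (negbT Hsh).
    by rewrite Ht andbT (no_out_t j f) subrr.
  rewrite subr0; case Ht: (tl f \in Pj); rewrite ?andbT ?andbF //=; case: (tl f != t j) => //.
  rewrite sym_priv //; case Hc: (chosen f) => //.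
  by move: Hh; rewrite inE (chosenT _ Hc); move: Ht; rewrite inE => ->.
rewrite big_mkcond (eq_bigr _ (fun f _ => keyf f)) sumrB big_split /=.
rewrite -!big_mkcond D2 addrK.
rewrite big_mkcond (eq_bigr (fun f => La j f * \sum_x form (tl f) x * X x)); last first.
  move=> f _; case: ifP => Hf; first by rewrite lamE // sym_sh // Bjsh.
  case: (eqVneq (La j f) 0) => [->|/Hsupp]; first by rewrite mul0r.
  by rewrite Hf.
rewrite (eq_bigr (fun f => \sum_x La j f * form (tl f) x * X x)); last first.
  by move=> f _; rewrite mulr_sumr; apply: eq_bigr => x _; rewrite mulrA.
rewrite exchange_big /= (eq_bigr (fun x => X x)); first by rewrite sum3.
by move=> x _; rewrite -mulr_suml ((HLa j).2 x) mul1r.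
Qed.

End Forms.
End Net.

Section Omega.
Variables (E : finType) (F : finFieldType).
Local Open Scope ring_scope.
Import GRing.Theory.
Hypothesis HF : (#|E|.+2 <= #|F|)%N.

Definition omf (x : option E) : F := nth 0 (enum [set~ (0 : F)]) (enum_rank x).

Lemma size_enumA : size (enum [set~ (0 : F)]) = #|F|.-1.
Proof. by rewrite -cardE cardsC1. Qed.

Lemma rank_lt (x : option E) : (enum_rank x < size (enum [set~ (0 : F)%R]))%N.
Proof.
rewrite size_enumA; apply: leq_trans (ltn_ord (enum_rank x)) _.
rewrite card_option -ltnS; case: #|F| HF => //.
Qed.

Lemma omf_inj : injective omf.
Proof.
move=> x y; rewrite /omf => H.
have := nth_uniq 0 (rank_lt x) (rank_lt y) (enum_uniq _); rewrite H eqxx => /esym/eqP Hr.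
by apply: enum_rank_inj; apply: ord_inj.
Qed.

Lemma omf_nz x : omf x != 0.
Proof.
have := mem_nth 0 (rank_lt x); rewrite mem_enum !inE; by [].
Qed.
End Omega.

Theorem lemma5 (V E : finType) (tl hd : E -> V) (s t : 'I_3 -> V) :
  is_network tl hd s t ->
  (forall v, ~~ is_src s v -> ~~ is_term t v ->
     (indeg hd v + outdeg tl v <= 3)%N) ->
  (forall v, ~~ has_type tl hd s t v 3 3 /\ ~~ has_type tl hd s t v 2 3 /\
             ~~ has_type tl hd s t v 3 2) ->
  (forall i j, exists p q, is_path tl hd (s i) (t j) p /\
                           is_path tl hd (s i) (t j) q /\ edge_disjoint p q) ->
  #|colors22 tl hd s t| = 2%N ->
  exists N : nat, forall F : finFieldType,
    (2%N \notin [pchar F])%R -> (N <= #|F|)%N -> linear_code_sum tl hd s t F.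
Proof.
move=> Hnet Hdeg Htype Hpaths Hcol.
exists (#|E|.+2) => F _ HN.
exact: (code_exists Hnet Hdeg Htype Hpaths Hcol (omf_inj HN) (omf_nz HN)).
Qed.
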